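(* Let $d$ be odd and let $a,b,c\geq 1$ be integers with $2a+2b+2c=d+1$. For each $j=1,2,\ldots,b$, the couple $(D(a,b,c),(2j+1,0))$ is not realizable: there is no monic real polynomial of degree $d$ with all coefficients non-zero, defining the sign pattern $D(a,b,c)$, having exactly $2j+1$ positive simple roots and no other real roots.
   Context: A monic polynomial $x^d+\sum_{j<d}a_jx^j$ with all $a_j\neq0$ defines the sign pattern $(+,\operatorname{sign}(a_{d-1}),\ldots,\operatorname{sign}(a_0))$. $D(a,b,c)$ denotes the sign pattern of length $d+1$ (listed from the coefficient of $x^d$ down to the constant term) consisting of $2a$ pluses, followed by $b$ pairs ''$-,+$'', followed by $2c$ minuses. A monic polynomial realizes $(\sigma,(pos,neg))$ if it has all coefficients non-zero, defines $\sigma$, has exactly $pos$ positive and $neg$ negative real roots, all simple, and no other real roots. *)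

(* Defs.v *)
From mathcomp Require Import all_boot all_order all_algebra.
From mathcomp Require Import reals.
Set Implicit Arguments. Unset Strict Implicit. Unset Printing Implicit Defensive.
Import Order.TTheory GRing.Theory Num.Theory.
Local Open Scope ring_scope.

(* A sign pattern is a list of booleans: true = '+', false = '-',
   listed from the coefficient of x^d down to the constant term. *)
Definition sign_pattern := seq bool.

Definition Dpat (a b c : nat) : sign_pattern :=
  nseq (2 * a) true ++ flatten (nseq b [:: false; true]) ++ nseq (2 * c) false.

Definition defines_pattern (R : realType) (p : {poly R}) (sigma : sign_pattern) :=
  size p = size sigma /\
  forall i : nat, (i < size sigma)%N ->
    p`_(size sigma - 1 - i) != 0 /\ (0 < p`_(size sigma - 1 - i)) = nth true sigma i.

Definition realizes (R : realType) (p : {poly R}) (sigma : sign_pattern)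
  (pos neg : nat) :=
  p \is monic /\ defines_pattern p sigma /\
  (exists sp : seq R, [/\ uniq sp, size sp = pos, all (fun x => (0 < x) && root p x) sp &
      forall x : R, 0 < x -> root p x -> x \in sp]) /\
  (exists sn : seq R, [/\ uniq sn, size sn = neg, all (fun x => (x < 0) && root p x) sn &
      forall x : R, x < 0 -> root p x -> x \in sn]) /\
  (forall x : R, root p x -> ~~ root p^`() x) /\
  ~~ root p 0.

(* Main.v *)
Require Import Defs.
From mathcomp Require Import all_boot all_order all_algebra.
From mathcomp Require Import reals.
From mathcomp Require Import zify ring lra.
Import Order.TTheory GRing.Theory Num.Theory.
Local Open Scope ring_scope.

Lemma thr (R : realFieldType) (f : nat -> R) (n t : nat) (r s : R) :
  0 < r -> r <= s ->
  (forall i, (i < n)%N -> (t <= i)%N -> 0 <= f i) ->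
  (forall i, (i < n)%N -> (i < t)%N -> f i <= 0) ->
  s ^+ t * (\sum_(i < n) f i * r ^+ i) <= r ^+ t * (\sum_(i < n) f i * s ^+ i).
Proof.
move=> r0 rs Hp Hn; rewrite !mulr_sumr; apply: ler_sum => i _.
have s0 : 0 < s by apply: lt_le_trans rs.
case: (leqP t i) => ti.
- have E : forall x : R, x ^+ i = x ^+ t * x ^+ (i - t) by move=> x; rewrite -exprD subnKC.
  rewrite !E.
  have -> : s ^+ t * (f i * (r ^+ t * r ^+ (i - t))) = (f i * (r ^+ t * s ^+ t)) * r ^+ (i - t) by ring.
  have -> : r ^+ t * (f i * (s ^+ t * s ^+ (i - t))) = (f i * (r ^+ t * s ^+ t)) * s ^+ (i - t) by ring.
  apply: ler_wpM2l; first by apply: mulr_ge0; [exact: Hp|apply: mulr_ge0; apply: exprn_ge0; apply: ltW].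
  by apply: lerXn2r; rewrite // nnegrE ltW.
- have ti' : (i <= t)%N by apply: ltnW.
  have E : forall x : R, x ^+ t = x ^+ i * x ^+ (t - i) by move=> x; rewrite -exprD subnKC.
  rewrite !E.
  have -> : s ^+ i * s ^+ (t - i) * (f i * r ^+ i) = (f i * (r ^+ i * s ^+ i)) * s ^+ (t - i) by ring.
  have -> : r ^+ i * r ^+ (t - i) * (f i * s ^+ i) = (f i * (r ^+ i * s ^+ i)) * r ^+ (t - i) by ring.
  apply: ler_wnM2l; first by apply: mulr_le0_ge0; [exact: Hn|apply: mulr_ge0; apply: exprn_ge0; apply: ltW].
  by apply: lerXn2r; rewrite // nnegrE ltW.
Qed.

Lemma nth_flat (b m : nat) : (m < 2 * b)%N ->
  nth true (flatten (nseq b [:: false; true])) m = odd m.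
Proof.
elim: b m => [|b IH] m hm; first by lia.
case: m hm => [|[|m]] hm //=.
rewrite IH; [by rewrite negbK|lia].
Qed.

Lemma size_flat (b : nat) : size (flatten (nseq b [:: false; true])) = (2 * b)%N.
Proof. elim: b => [|b IH] //=; rewrite IH; lia. Qed.

Lemma size_Dpat a b c : size (Dpat a b c) = (2 * a + 2 * b + 2 * c)%N.
Proof. rewrite /Dpat !size_cat !size_nseq size_flat; lia. Qed.

Lemma nth_Dpat a b c k : (k < 2 * a + 2 * b + 2 * c)%N ->
  nth true (Dpat a b c) k = (k < 2 * a)%N || ((k < 2 * a + 2 * b)%N && odd k).
Proof.
move=> hk; rewrite /Dpat nth_cat size_nseq.
case: (ltnP k (2 * a)) => h1; first by rewrite nth_nseq h1.
rewrite nth_cat size_flat /=.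
case: (ltnP (k - 2 * a) (2 * b)) => h2.
- rewrite nth_flat // oddB // oddM /= addbF.
  by have -> : (k < 2 * a + 2 * b)%N by lia.
- rewrite nth_nseq.
  have -> : (k - 2 * a - 2 * b < 2 * c)%N by lia.
  by have -> : (k < 2 * a + 2 * b)%N = false by lia.
Qed.

Lemma bE (i b c : nat) : (i < 2 * c)%N ->
  ((2 * b + 2 * c <= i)%N || ((2 * c <= i)%N && ~~ false)) = false.
Proof.
move=> h; have -> : (2 * b + 2 * c <= i)%N = false by lia.
by have -> : (2 * c <= i)%N = false by lia.
Qed.

Lemma bO (i b c : nat) : (i < 2 * b + 2 * c)%N ->
  ((2 * b + 2 * c <= i)%N || ((2 * c <= i)%N && ~~ true)) = false.
Proof. by move=> h; rewrite andbF orbF; lia. Qed.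

Lemma key_ineq (R : realFieldType) (r s u v : R) (M K : nat) :
  0 < r -> r < s -> 0 < u -> (0 < K)%N ->
  s ^+ M * s ^+ K * u <= r ^+ M * r ^+ K * v ->
  r ^+ M * v <= s ^+ M * u -> False.
Proof.
move=> r0 rs u0 K0 h2 h1.
have s0 : 0 < s by apply: lt_trans rs.
have hX : 0 < s ^+ M * u by apply: mulr_gt0; [apply: exprn_gt0|].
have hA : 0 <= r ^+ K by apply: exprn_ge0; apply: ltW.
have hAB : r ^+ K < s ^+ K by rewrite ltrXn2r ?ltW //; lia.
have h3 : r ^+ K * (r ^+ M * v) <= r ^+ K * (s ^+ M * u) by apply: ler_wpM2l.
have h4 : r ^+ K * (s ^+ M * u) < s ^+ K * (s ^+ M * u) by rewrite ltr_pM2r.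
have e1 : s ^+ M * s ^+ K * u = s ^+ K * (s ^+ M * u) by ring.
have e2 : r ^+ M * r ^+ K * v = r ^+ K * (r ^+ M * v) by ring.
rewrite e1 e2 in h2.
have := le_lt_trans (le_trans h2 h3) h4.
by rewrite ltxx.
Qed.
Theorem theorem6 (R : realType) (d a b c : nat) :
  odd d -> (1 <= a)%N -> (1 <= b)%N -> (1 <= c)%N ->
  (2 * a + 2 * b + 2 * c = d + 1)%N ->
  forall j : nat, (1 <= j <= b)%N ->
  ~ exists p : {poly R}, size p = d.+1 /\ realizes p (Dpat a b c) (2 * j + 1) 0.
Proof.
move=> od ha hb hc hd j hj [p [sz [_ [[szp pat] [[sp [usp ssp allp _]] [[sn [_ ssn _ hneg]] _]]]]]].
set n := size p.
have hn : n = (2 * a + 2 * b + 2 * c)%N by rewrite /n sz; lia.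
have cf : forall i, (i < n)%N -> p`_i != 0 /\
    (0 < p`_i) = (2 * b + 2 * c <= i)%N || ((2 * c <= i)%N && ~~ odd i).
  move=> i hi.
  have hk : (size (Dpat a b c) - 1 - (size (Dpat a b c) - 1 - i) = i)%N.
    rewrite size_Dpat; lia.
  have [h1 h2] := pat (size (Dpat a b c) - 1 - i)%N ltac:(rewrite size_Dpat; lia).
  rewrite hk in h1 h2; split => //; rewrite h2 size_Dpat nth_Dpat; last by lia.
  have -> : (2 * a + 2 * b + 2 * c - 1 - i < 2 * a)%N = (2 * b + 2 * c <= i)%N by lia.
  have -> : (2 * a + 2 * b + 2 * c - 1 - i < 2 * a + 2 * b)%N = (2 * c <= i)%N by lia.
  have -> : odd (2 * a + 2 * b + 2 * c - 1 - i) = ~~ odd i.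
    have e : ((2 * a + 2 * b + 2 * c - 1 - i) + i = (2 * (a + b + c - 1)).+1)%N by lia.
    have := congr1 odd e; rewrite oddD /= oddM /=.
    by case: (odd i); case: (odd _).
  done.
have ge0 : forall i, (i < n)%N -> (0 < p`_i) -> 0 <= p`_i by move=> i _ /ltW.
have le0 : forall i, (i < n)%N -> (0 < p`_i) = false -> p`_i <= 0.
  by move=> i _ h; rewrite leNgt h.
pose E (x : R) := \sum_(i < n) (if odd i then 0 else p`_i) * x ^+ i.
pose O (x : R) := \sum_(i < n) (if odd i then p`_i else 0) * x ^+ i.
have hp : forall x, p.[x] = E x + O x.
  move=> x; rewrite horner_coef -big_split /=; apply: eq_bigr => i _.
  by case: (odd i); rewrite mul0r ?add0r ?addr0.
have hm : forall x, p.[- x] = E x - O x.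
  move=> x; rewrite horner_coef /E /O -sumrN -big_split /=; apply: eq_bigr => i _.
  rewrite exprNn -signr_odd.
  by case: (odd i) => /=; ring.
have p0 : p.[0] < 0.
  rewrite horner_coef0.
  have hn0 : (0 < n)%N by lia.
  have [h1 h2] := cf 0%N hn0.
  have h3 : (0 < p`_0) = false by rewrite h2; lia.
  by rewrite lt_neqAle h1 le0.
have neg : forall x, x < 0 -> p.[x] < 0.
  move=> x hx; rewrite ltNge; apply/negP => hx0.
  have hiv : (- p).[x] <= 0 <= (- p).[0].
    by rewrite !hornerN oppr_le0 hx0 oppr_ge0 /= ltW.
  have := @poly_ivt R (- p) x 0 (ltW hx) hiv.
  case=> y /andP [y1 y2] ry.
  rewrite rootN in ry.
  have yn : y != 0 by apply: contraTneq ry => ->; rewrite /root lt_eqF.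
  have : y \in sn by apply: hneg => //; rewrite lt_neqAle yn y2.
  by case: sn ssn hneg.
have key : forall r s, 0 < r -> r < s -> root p r -> root p s -> False.
  move=> r s r0 rs hr hs.
  have s0 : 0 < s by apply: lt_trans rs.
  move: hr hs; rewrite /root !hp => /eqP hr /eqP hs.
  have h1 : s ^+ (2 * c) * E r <= r ^+ (2 * c) * E s.
    rewrite /E; apply: (@thr _ (fun i : nat => if odd i then 0 else p`_i)) => //; first exact: ltW.
      move=> i hi hci; case: ifP => oi //.
      by apply: ge0 => //; rewrite (cf i hi).2 hci oi orbT.
    move=> i hi hci; case: ifP => oi //.
    by apply: le0 => //; rewrite (cf i hi).2 oi bE.
  have h2 : s ^+ (2 * b + 2 * c) * O r <= r ^+ (2 * b + 2 * c) * O s.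
    rewrite /O; apply: (@thr _ (fun i : nat => if odd i then p`_i else 0)) => //; first exact: ltW.
      move=> i hi hci; case: ifP => oi //.
      by apply: ge0 => //; rewrite (cf i hi).2 hci.
    move=> i hi hci; case: ifP => oi //.
    by apply: le0 => //; rewrite (cf i hi).2 oi bO.
  have nr := neg (- r) ltac:(rewrite oppr_lt0 //).
  have ns := neg (- s) ltac:(rewrite oppr_lt0 //).
  rewrite !hm in nr ns.
  move: h1 h2 nr ns hr hs; generalize (E r) (E s) (O r) (O s) => er es or os h1 h2 nr ns hr hs.
  have eo : or = - er by lra.
  have eo' : os = - es by lra.
  rewrite eo eo' addnC (exprD s) (exprD r) in h2.
  have hu : 0 < - er by lra.
  have K0 : (0 < 2 * b)%N by lia.
  apply: (@key_ineq _ r s (- er) (- es) (2 * c) (2 * b) r0 rs hu K0 h2).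
  by rewrite !mulrN lerN2.
case: sp usp ssp allp => [|x1 [|x2 sp']] // usp ssp allp.
  by move: ssp => /=; lia.
  by move: ssp => /=; lia.
move: allp => /= /and3P [/andP [p1 r1] /andP [p2 r2] _].
move: usp => /= /andP [nx _]; rewrite inE negb_or in nx.
case/andP: nx => nx _.
case: (ltgtP x1 x2) nx => // h _.
- exact: (key x1 x2).
- exact: (key x2 x1).
Qed.
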